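(* Let $n\ge2$ and $0<r<1$ (with $r=\alpha/\beta$, $\alpha,\beta>0$, $\alpha^2+\beta^2=1$). Let $\gamma_-^{(n)}$ be the unique root in $(0,1-r^{2/n})$ of $\alpha^2+\beta^2\gamma^n=\alpha\beta(1-\gamma)^{n/2}$, let $\gamma_+^{(n)}=1-r^{2/n}$ and $\gamma_e^{(n)}=r^{2/n}$. Set $r_1^{(n)}=(1+2^{2/n})^{-n/2}$ and $r_2^{(n)}=2^{-n/2}$ (equivalently $\alpha_1^{(n)}=1/\sqrt{1+(1+2^{2/n})^n}$ and $\alpha_2^{(n)}=1/\sqrt{1+2^n}$). Then - if $r<r_1^{(n)}$: $\gamma_e^{(n)}<\gamma_-^{(n)}<\gamma_+^{(n)}$; - if $r_1^{(n)}<r<r_2^{(n)}$: $\gamma_-^{(n)}<\gamma_e^{(n)}<\gamma_+^{(n)}$; - if $r_2^{(n)}<r<1$: $\gamma_-^{(n)}<\gamma_+^{(n)}<\gamma_e^{(n)}$. In particular for $n=2$ the boundaries are $\alpha=1/\sqrt{10}$ and $\alpha=1/\sqrt5$.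
   Context: These are the thresholds of the amplitude-damped state $\rho_n(\gamma)=\mathcal E_\gamma^{\otimes n}(|\psi_n\rangle\langle\psi_n|)$, $|\psi_n\rangle=\alpha|0^n\rangle+\beta|1^n\rangle$, where $\mathcal E_\gamma$ is single-qubit amplitude damping (Kraus operators $|0\rangle\langle0|+\sqrt{1-\gamma}|1\rangle\langle1|$ and $\sqrt\gamma|0\rangle\langle1|$): $\gamma_\mp^{(n)}$ are where the trajectory enters/exits the stabilizer polytope, and $\gamma_e^{(n)}=r^{2/n}$ is where the bipartite negativity vanishes. *)

(* Defs.v *)
From Stdlib Require Import Reals.
Open Scope R_scope.

Definition gamma_plus (n : nat) (r : R) : R := 1 - Rpower r (2 / INR n).
(* gamma_e^(n) = r^(2/n) : where the bipartite negativity vanishes *)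
Definition gamma_e (n : nat) (r : R) : R := Rpower r (2 / INR n).

Definition gamma_minus_eq (n : nat) (alpha beta g : R) : Prop :=
  alpha ^ 2 + beta ^ 2 * g ^ n = alpha * beta * Rpower (1 - g) (INR n / 2).

Definition r1 (n : nat) : R := Rpower (1 + Rpower 2 (2 / INR n)) (- (INR n / 2)).
Definition r2 (n : nat) : R := Rpower 2 (- (INR n / 2)).

Definition alpha1 (n : nat) : R := 1 / sqrt (1 + (1 + Rpower 2 (2 / INR n)) ^ n).
Definition alpha2 (n : nat) : R := 1 / sqrt (1 + 2 ^ n).

(* Main.v *)
Require Import Defs.
From Stdlib Require Import Reals Lra Psatz.
Open Scope R_scope.

Lemma Rp_pos x y : 0 < Rpower x y.
Proof. unfold Rpower; apply exp_pos. Qed.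

Lemma Rp_one y : Rpower 1 y = 1.
Proof. unfold Rpower; rewrite ln_1, Rmult_0_r; apply exp_0. Qed.

Lemma Rp_lt_iff a b c : 0 < c -> 0 < a -> 0 < b -> (a < b <-> Rpower a c < Rpower b c).
Proof.
  intros Hc Ha Hb; split; intro H.
  - apply Rlt_Rpower_l; lra.
  - destruct (Rlt_or_le a b) as [|Hba]; auto.
    assert (Rpower b c <= Rpower a c) by (apply Rle_Rpower_l; lra). lra.
Qed.

Lemma sq_lt_iff x y : 0 < x -> 0 < y -> (x < y <-> x * x < y * y).
Proof. intros Hx Hy; split; intro H; [nra|]. destruct (Rlt_or_le x y); auto. nra. Qed.

Lemma sq_lemma a b rho M : 0 < a -> 0 < b -> a ^ 2 + b ^ 2 = 1 -> 0 < rho -> 0 < M ->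
  rho * rho * M = 1 ->
  (a / b < rho <-> a < 1 / sqrt (1 + M)) /\ (rho < a / b <-> 1 / sqrt (1 + M) < a).
Proof.
  intros Ha Hb Hab Hr HM Hrho.
  set (u := a / b). assert (Hu : u * b = a) by (unfold u; field; lra).
  assert (u > 0) by (unfold u; apply Rdiv_lt_0_compat; lra).
  set (s := sqrt (1 + M)).
  assert (Hs : s * s = 1 + M) by (apply sqrt_sqrt; lra).
  assert (Hs0 : 0 < s) by (apply sqrt_lt_R0; lra).
  set (q := 1 / s). assert (Hq : q * s = 1) by (unfold q; field; lra).
  assert (Hq0 : 0 < q) by (unfold q; apply Rdiv_lt_0_compat; lra).
  assert (Hqq : q * q * (1 + M) = 1) by (rewrite <- Hs; nra).
  assert (Hb2 : 0 < b * b) by nra.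
  assert (Ha2 : a * a = u * u * (b * b)) by (rewrite <- Hu; ring).
  assert (Hbb : b * b = 1 - a * a) by lra.
  assert (E1 : u * u * M < 1 <-> u * u < rho * rho).
  { split; intro H1.
    - assert (u*u*M*(rho*rho) < 1*(rho*rho)) by (apply Rmult_lt_compat_r; nra). nra.
    - assert (u*u*M < rho*rho*M) by (apply Rmult_lt_compat_r; nra). nra. }
  assert (E1' : 1 < u * u * M <-> rho * rho < u * u).
  { split; intro H1.
    - assert (1*(rho*rho) < u*u*M*(rho*rho)) by (apply Rmult_lt_compat_r; nra). nra.
    - assert (rho*rho*M < u*u*M) by (apply Rmult_lt_compat_r; nra). nra. }
  assert (E2 : u * u * M < 1 <-> a * a * (1 + M) < 1).
  { split; intro H1.
    - assert (u*u*M*(b*b) < 1*(b*b)) by (apply Rmult_lt_compat_r; nra). nra.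
    - assert (a*a*M < b*b) by nra.
      assert (u*u*M*(b*b) < 1*(b*b)) by (rewrite Rmult_1_l; replace (u*u*M*(b*b)) with (a*a*M) by (rewrite Ha2; ring); lra).
      apply Rmult_lt_reg_r with (b*b); nra. }
  assert (E2' : 1 < u * u * M <-> 1 < a * a * (1 + M)).
  { split; intro H1.
    - assert (1*(b*b) < u*u*M*(b*b)) by (apply Rmult_lt_compat_r; nra). nra.
    - assert (b*b < a*a*M) by nra.
      assert (1*(b*b) < u*u*M*(b*b)) by (rewrite Rmult_1_l; replace (u*u*M*(b*b)) with (a*a*M) by (rewrite Ha2; ring); lra).
      apply Rmult_lt_reg_r with (b*b); nra. }
  assert (E3 : a * a * (1 + M) < 1 <-> a * a < q * q).
  { split; intro H1.
    - assert (a*a*(1+M)*(q*q) < 1*(q*q)) by (apply Rmult_lt_compat_r; nra). nra.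
    - assert (a*a*(1+M) < q*q*(1+M)) by (apply Rmult_lt_compat_r; nra). nra. }
  assert (E3' : 1 < a * a * (1 + M) <-> q * q < a * a).
  { split; intro H1.
    - assert (1*(q*q) < a*a*(1+M)*(q*q)) by (apply Rmult_lt_compat_r; nra). nra.
    - assert (q*q*(1+M) < a*a*(1+M)) by (apply Rmult_lt_compat_r; nra). nra. }
  assert (K : u * u < rho * rho <-> a * a < q * q) by (rewrite <- E1, E2, E3; tauto).
  assert (K' : rho * rho < u * u <-> q * q < a * a) by (rewrite <- E1', E2', E3'; tauto).
  split.
  - rewrite (sq_lt_iff u rho), (sq_lt_iff a q); auto.
  - rewrite (sq_lt_iff rho u), (sq_lt_iff q a); auto.
Qed.

Theorem corollary1 (n : nat) (alpha beta r gm : R) :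
  (2 <= n)%nat ->
  0 < alpha -> 0 < beta -> alpha ^ 2 + beta ^ 2 = 1 ->
  r = alpha / beta -> 0 < r < 1 ->
  (* gm is the (unique) root of the gamma_- equation in (0, 1 - r^(2/n)) *)
  0 < gm < gamma_plus n r -> gamma_minus_eq n alpha beta gm ->
  ((r < r1 n -> gamma_e n r < gm < gamma_plus n r) /\
   (r1 n < r < r2 n -> gm < gamma_e n r < gamma_plus n r) /\
   (r2 n < r < 1 -> gm < gamma_plus n r < gamma_e n r)) /\
  ((r < r1 n <-> alpha < alpha1 n) /\ (r1 n < r <-> alpha1 n < alpha) /\
   (r < r2 n <-> alpha < alpha2 n) /\ (r2 n < r <-> alpha2 n < alpha)) /\
  (n = 2%nat -> alpha1 n = 1 / sqrt 10 /\ alpha2 n = 1 / sqrt 5).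
Proof.
  intros Hn Ha Hb Hab Hr Hr01 Hgm Heq.
  unfold gamma_plus, gamma_e in *.
  assert (HN : 2 <= INR n) by (replace 2 with (INR 2) by (simpl; lra); apply le_INR; lia).
  set (N := INR n) in *.
  set (t := Rpower r (2 / N)).
  assert (Ht0 : 0 < t) by apply Rp_pos.
  assert (Ht1 : t < 1).
  { rewrite <- (Rp_one (2 / N)). unfold t. apply Rlt_Rpower_l; [|lra].
    apply Rdiv_lt_0_compat; lra. }
  assert (Hrt : Rpower t (N / 2) = r).
  { unfold t; rewrite Rpower_mult. replace (2 / N * (N / 2)) with 1 by (field; lra).
    apply Rpower_1; lra. }
  assert (Hgm1 : gm < 1 - t) by (unfold t; exact (proj2 Hgm)).
  assert (Hpow : forall g, 0 < g -> g ^ n = Rpower g N).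
  { intros g Hg; unfold N; rewrite Rpower_pow; auto. }
  assert (Htn : Rpower t N = r ^ 2).
  { unfold t; rewrite Rpower_mult. replace (2 / N * N) with (INR 2) by (simpl; field; lra).
    apply Rpower_pow; lra. }
  set (P := fun g => Rpower (1 - g) (N / 2)).
  assert (HE : r ^ 2 + Rpower gm N = r * P gm).
  { unfold gamma_minus_eq in Heq. rewrite <- Hpow by lra.
    assert (alpha = r * beta) by (subst r; field; lra).
    subst alpha. unfold P. fold N in Heq.
    apply Rmult_eq_reg_l with (beta ^ 2); [|apply pow_nonzero; lra].
    lra. }
  assert (Hmono : forall g1 g2, 0 < g1 < g2 -> g2 < 1 ->
            Rpower g1 N < Rpower g2 N /\ P g2 < P g1).
  { intros g1 g2 H1 H2. split.
    - apply Rlt_Rpower_l; lra.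
    - unfold P; apply Rlt_Rpower_l; lra. }
  assert (HA : forall c, 0 < c < 1 -> r ^ 2 + Rpower c N < r * P c -> c < gm).
  { intros c Hc Hlt. destruct (Rlt_or_le c gm) as [|Hle]; auto.
    destruct Hle as [Hlt2|Heq2].
    - destruct (Hmono gm c) as [X Y]; try lra.
      assert (r * P c < r * P gm) by (apply Rmult_lt_compat_l; lra). lra.
    - subst c; lra. }
  assert (HB : forall c, 0 < c < 1 -> r * P c < r ^ 2 + Rpower c N -> gm < c).
  { intros c Hc Hlt. destruct (Rlt_or_le gm c) as [|Hle]; auto.
    destruct Hle as [Hlt2|Heq2].
    - destruct (Hmono c gm) as [X Y]; try lra.
      assert (r * P gm < r * P c) by (apply Rmult_lt_compat_l; lra). lra.
    - subst c; lra. }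
  set (s := Rpower 2 (2 / N)).
  assert (Hs0 : 0 < s) by apply Rp_pos.
  assert (HsN : Rpower s (N / 2) = 2).
  { unfold s; rewrite Rpower_mult. replace (2 / N * (N / 2)) with 1 by (field; lra).
    apply Rpower_1; lra. }
  assert (H2pos : 0 < 2 / N) by (apply Rdiv_lt_0_compat; lra).
  assert (HN2pos : 0 < N / 2) by lra.
  assert (Hr1 : Rpower (r1 n) (2 / N) = / (1 + s)).
  { unfold r1; fold N; fold s. rewrite Rpower_mult.
    replace (- (N / 2) * (2 / N)) with (- (1)) by (field; lra).
    rewrite Rpower_Ropp, Rpower_1; lra. }
  assert (Hr2 : Rpower (r2 n) (2 / N) = / 2).
  { unfold r2; fold N. rewrite Rpower_mult.
    replace (- (N / 2) * (2 / N)) with (- (1)) by (field; lra).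
    rewrite Rpower_Ropp, Rpower_1; lra. }
  assert (Hr1p : 0 < r1 n) by apply Rp_pos.
  assert (Hr2p : 0 < r2 n) by apply Rp_pos.
  assert (Ct : r < r1 n <-> t < / (1 + s)).
  { rewrite <- Hr1. apply Rp_lt_iff; lra. }
  assert (Ct' : r1 n < r <-> / (1 + s) < t).
  { rewrite <- Hr1. apply Rp_lt_iff; lra. }
  assert (Dt : r < r2 n <-> t < / 2).
  { rewrite <- Hr2. apply Rp_lt_iff; lra. }
  assert (Dt' : r2 n < r <-> / 2 < t).
  { rewrite <- Hr2. apply Rp_lt_iff; lra. }
  assert (Hst : Rpower (s * t) (N / 2) = 2 * r).
  { rewrite <- Rpower_mult_distr by lra. rewrite HsN, Hrt; lra. }
  assert (Ht1t : 0 < 1 - t) by lra.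
  assert (Hinv : forall x, 0 < x -> x * / x = 1) by (intros; field; lra).
  assert (Hi1 := Hinv (1 + s) ltac:(lra)).
  assert (Hip : 0 < / (1 + s)) by (apply Rinv_0_lt_compat; lra).
  split; [split; [|split]|split].
  - intros H. apply Ct in H. split; [|lra].
    apply HA; [lra|]. rewrite Htn.
    assert (s * t < 1 - t) by nra.
    assert (Rpower (s * t) (N / 2) < P t) by (unfold P; apply Rlt_Rpower_l; nra).
    rewrite Hst in *. nra.
  - intros [H H']. apply Ct' in H. apply Dt in H'. split; [|lra].
    apply HB; [lra|]. rewrite Htn.
    assert (1 - t < s * t) by nra.
    assert (P t < Rpower (s * t) (N / 2)) by (unfold P; apply Rlt_Rpower_l; nra).
    rewrite Hst in *. nra.
  - intros [H _]. apply Dt' in H. lra.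
  - assert (HK : 0 < 1 + s) by lra.
    assert (HKn : 0 < (1 + s) ^ n) by (apply pow_lt; lra).
    assert (HR1 : r1 n * r1 n * (1 + s) ^ n = 1).
    { unfold r1; fold N; fold s. rewrite <- Rpower_plus.
      rewrite <- Rpower_pow by lra. fold N.
      rewrite <- Rpower_plus. replace (- (N / 2) + - (N / 2) + N) with 0 by lra.
      apply Rpower_O; lra. }
    assert (H2n : 0 < 2 ^ n) by (apply pow_lt; lra).
    assert (HR2 : r2 n * r2 n * 2 ^ n = 1).
    { unfold r2; fold N. rewrite <- Rpower_plus.
      rewrite <- Rpower_pow by lra. fold N.
      rewrite <- Rpower_plus. replace (- (N / 2) + - (N / 2) + N) with 0 by lra.
      apply Rpower_O; lra. }
    destruct (sq_lemma alpha beta (r1 n) ((1 + s) ^ n)) as [X1 Y1]; auto.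
    destruct (sq_lemma alpha beta (r2 n) (2 ^ n)) as [X2 Y2]; auto.
    unfold alpha1, alpha2; fold N; fold s. subst r.
    repeat split; try (apply X1; assumption); try (apply Y1; assumption);
      try (apply X2; assumption); try (apply Y2; assumption);
      intro Hx; first [apply X1 | apply Y1 | apply X2 | apply Y2]; assumption.
  - intros ->. unfold alpha1, alpha2.
    replace (2 / INR 2) with 1 by (simpl; field).
    rewrite Rpower_1 by lra. split; f_equal; f_equal; simpl; ring.
Qed.
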